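(* Let $S$ be a topological Clifford semigroup in which every maximal subgroup $G_e$ is open. Then $E(S)$ is a $G_\delta$-subset of $S$ if and only if, for every $e\in E(S)$, the singleton $\{e\}$ is a $G_\delta$-subset of $G_e$.
   Context: A Clifford semigroup is an inverse semigroup (each $x$ has a unique $x^{-1}$ with $xx^{-1}x=x$, $x^{-1}xx^{-1}=x^{-1}$) with $xx^{-1}=x^{-1}x$ for all $x$; topological means multiplication and inversion are continuous. $E(S)$ is the set of idempotents; $G_e:=\{x: xx^{-1}=e\}$ with the subspace topology. A $G_\delta$-subset is a countable intersection of open sets. *)

(* Defs.v *)
From mathcomp Require Import all_boot all_order.
From mathcomp Require Import all_classical topology.
Set Implicit Arguments. Unset Strict Implicit. Unset Printing Implicit Defensive.
Local Open Scope classical_set_scope.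

Record topological_clifford_semigroup (T : topologicalType)
    (mul : T -> T -> T) (inv : T -> T) : Prop := {
  tcs_assoc : forall x y z, mul x (mul y z) = mul (mul x y) z;
  tcs_inv1 : forall x, mul (mul x (inv x)) x = x;
  tcs_inv2 : forall x, mul (mul (inv x) x) (inv x) = inv x;
  tcs_inv_unique : forall x y, mul (mul x y) x = x -> mul (mul y x) y = y -> y = inv x;
  tcs_clifford : forall x, mul x (inv x) = mul (inv x) x;
  tcs_mul_cont : continuous (fun p : T * T => mul p.1 p.2);
  tcs_inv_cont : continuous inv
}.

Definition idempotents (T : Type) (mul : T -> T -> T) : set T :=
  [set x | mul x x = x].

Definition maxsubgroup (T : Type) (mul : T -> T -> T) (inv : T -> T) (e : T) : set T :=
  [set x | mul x (inv x) = e].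

(* B is a G_delta-subset of the subspace A (subspace topology): B is a countable
   intersection of sets open in A, i.e. of the form V `&` A with V open in T. *)
Definition Gdelta_in (T : topologicalType) (A B : set T) : Prop :=
  exists U : nat -> set T,
    (forall n, exists V : set T, open V /\ U n = V `&` A) /\
    \bigcap_n U n = B.

Definition Gdelta (T : topologicalType) (B : set T) : Prop :=
  exists U : nat -> set T, (forall n, open (U n)) /\ \bigcap_n U n = B.

(* Main.v *)
Require Import Defs.
From mathcomp Require Import all_boot all_order.
From mathcomp Require Import all_classical topology.
Local Open Scope classical_set_scope.

Theorem lemma4p4 (T : topologicalType) (mul : T -> T -> T) (inv : T -> T)
  (hS : topological_clifford_semigroup mul inv)
  (hopen : forall e, idempotents mul e -> open (maxsubgroup mul inv e)) :
  Gdelta (idempotents mul) <->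
  (forall e, idempotents mul e -> Gdelta_in (maxsubgroup mul inv e) [set e]).
Proof.
have invid : forall f, idempotents mul f -> inv f = f.
  move=> f hf; symmetry; apply: (tcs_inv_unique hS); rewrite /idempotents /= in hf;
  by rewrite !hf.
have eG : forall e, idempotents mul e -> maxsubgroup mul inv e e.
  by move=> e he; rewrite /maxsubgroup /= invid.
split.
- move=> [U [Uo UE]] e he; exists (fun n => U n `&` maxsubgroup mul inv e); split.
    by move=> n; exists (U n).
  rewrite bigcapIl; last by exists 0%N.
  rewrite UE; apply/seteqP; split => x /=.
    move=> [hx Gx]; rewrite /maxsubgroup /= invid // in Gx.
    by rewrite -Gx hx.
  by move=> ->; split; [exact: he | exact: eG].
- move=> H.
  have : forall e, exists U : nat -> set T, idempotents mul e ->
     (forall n, exists V : set T, open V /\ U n = V `&` maxsubgroup mul inv e) /\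
     \bigcap_n U n = [set e].
    move=> e; case: (pselect (idempotents mul e)) => he.
      by have [U HU] := H e he; exists U.
    by exists (fun _ => set0).
  move=> /choice [F HF].
  exists (fun n => \bigcup_(e in idempotents mul) F e n); split.
    move=> n; apply: bigcup_open => e he.
    have [V [Vo ->]] := (HF e he).1 n.
    by apply: openI => //; apply: hopen.
  apply/seteqP; split => x /=.
    move=> hx.
    have sub : forall e n, idempotents mul e -> F e n x -> mul x (inv x) = e.
      move=> e n he hF; have [V [_ EV]] := (HF e he).1 n.
      by rewrite EV in hF; case: hF.
    have [e0 he0 _] := hx 0%N I.
    have he' : idempotents mul (mul x (inv x)).
      have [e he hF] := hx 0%N I; by rewrite (sub e 0%N he hF).
    have : (\bigcap_n F (mul x (inv x)) n) x.
      move=> n _; have [e he hF] := hx n I.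
      by rewrite (sub e n he hF).
    rewrite (HF _ he').2 /= => ->; exact: he'.
  move=> hx n _; exists x => //.
  have := (HF x hx).2; move/seteqP=> [_ h]; exact: (h x erefl n I).
Qed.
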